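(* In $M_2(\mathbb{C})[z]$ define $$\alpha_1=\begin{pmatrix}1&0\\-1&0\end{pmatrix}+\begin{pmatrix}0&0\\1&0\end{pmatrix}z+\begin{pmatrix}1&1\\0&0\end{pmatrix}\frac{z^2}{2},\qquad \alpha_3=\begin{pmatrix}1&1\\-1&-1\end{pmatrix}z+\begin{pmatrix}-1&1\\0&0\end{pmatrix}\frac{z^2}{2},$$ $$\alpha_4=\begin{pmatrix}0&0\\1&0\end{pmatrix}\frac{z^2}{2},\qquad \alpha_5=\begin{pmatrix}0&0\\0&1\end{pmatrix}\frac{z^2}{2},$$ and set $\beta_1=\alpha_1+\alpha_3$, $\beta_3=\alpha_1-\alpha_3$, $\beta_4=2\alpha_4$, $\beta_5=2\alpha_5$. Then the set $$\{\beta_4\beta_1,\beta_3,\beta_1\}\cup\{\beta_5^n: n\ge0\}\cup\{\beta_5^n\beta_4: n\ge0\}\cup\{\beta_5^n\beta_1\beta_4: n\ge0\}\cup\{\beta_5^n\beta_1: n\ge1\}\cup\{\beta_3\beta_5^n: n\ge1\}$$ $$\cup\{\beta_1\beta_5^n: n\ge1\}\cup\{\beta_3\beta_5^n\beta_4: n\ge0\}\cup\{\beta_1\beta_5^n\beta_4: n\ge1\}$$ is linearly independent over $\mathbb{C}$. *)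

(* Defs.v *)
From HB Require Import structures.
From mathcomp Require Import all_boot all_order all_algebra.
From mathcomp Require Import reals complex.
Set Implicit Arguments. Unset Strict Implicit. Unset Printing Implicit Defensive.
Import Order.TTheory GRing.Theory Num.Theory.
Local Open Scope ring_scope.

Section Defs.
Variable C : fieldType.

Definition mx2 (a b c d : C) : 'M[C]_2 :=
  \matrix_(i < 2, j < 2)
    (if (i : nat) == 0%N then (if (j : nat) == 0%N then a else b)
     else (if (j : nat) == 0%N then c else d)).

Definition half : C := 2^-1.

Definition alpha1 : {poly 'M[C]_2} :=
  (mx2 1 0 (-1) 0)%:P + (mx2 0 0 1 0)%:P * 'X + (half *: mx2 1 1 0 0)%:P * 'X^2.
Definition alpha3 : {poly 'M[C]_2} :=
  (mx2 1 1 (-1) (-1))%:P * 'X + (half *: mx2 (-1) 1 0 0)%:P * 'X^2.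
Definition alpha4 : {poly 'M[C]_2} := (half *: mx2 0 0 1 0)%:P * 'X^2.
Definition alpha5 : {poly 'M[C]_2} := (half *: mx2 0 0 0 1)%:P * 'X^2.

Definition beta1 := alpha1 + alpha3.
Definition beta3 := alpha1 - alpha3.
Definition beta4 := alpha4 *+ 2.
Definition beta5 := alpha5 *+ 2.

Definition Bset (p : {poly 'M[C]_2}) : Prop :=
  p = beta4 * beta1 \/ p = beta3 \/ p = beta1 \/
  (exists n : nat, p = beta5 ^+ n) \/
  (exists n : nat, p = beta5 ^+ n * beta4) \/
  (exists n : nat, p = beta5 ^+ n * beta1 * beta4) \/
  (exists2 n : nat, (1 <= n)%N & p = beta5 ^+ n * beta1) \/
  (exists2 n : nat, (1 <= n)%N & p = beta3 * beta5 ^+ n) \/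
  (exists2 n : nat, (1 <= n)%N & p = beta1 * beta5 ^+ n) \/
  (exists n : nat, p = beta3 * beta5 ^+ n * beta4) \/
  (exists2 n : nat, (1 <= n)%N & p = beta1 * beta5 ^+ n * beta4).

Definition cscale (c : C) (p : {poly 'M[C]_2}) : {poly 'M[C]_2} :=
  (c%:M)%:P * p.

Definition lin_indep (S : {poly 'M[C]_2} -> Prop) : Prop :=
  forall (s : seq {poly 'M[C]_2}) (c : {poly 'M[C]_2} -> C),
    uniq s -> (forall p, p \in s -> S p) ->
    \sum_(p <- s) cscale (c p) p = 0 ->
    forall p, p \in s -> c p = 0.
End Defs.

(* Main.v *)
Require Import Defs.
From HB Require Import structures.
From mathcomp Require Import all_boot all_order all_algebra zify.
From mathcomp Require Import reals complex ring.
Set Implicit Arguments. Unset Strict Implicit. Unset Printing Implicit Defensive.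
Import Order.TTheory GRing.Theory Num.Theory.
Local Open Scope ring_scope.

Inductive q4 := Q4 of int & int & int & int.
Definition ent (q : q4) (i j : bool) : int :=
  let: Q4 a b c d := q in if i then (if j then d else c) else (if j then b else a).

Inductive tag := TA | TB | TC | TD0 | TD1 | TD2 | TD of nat | TE of nat
  | TG0 | TG of nat | TH1 | TH of nat | TI of nat | TJ of nat | TK of nat | TL of nat.

Definition terms (t : tag) : seq (nat * q4) :=
  match t with
  | TA => [:: ((2)%N, Q4 (0)%Z (0)%Z (1)%Z (0)%Z); ((3)%N, Q4 (0)%Z (0)%Z (1)%Z (1)%Z); ((4)%N, Q4 (0)%Z (0)%Z (0)%Z (1)%Z)]
  | TB => [:: ((0)%N, Q4 (1)%Z (0)%Z (-1)%Z (0)%Z); ((1)%N, Q4 (-1)%Z (-1)%Z (2)%Z (1)%Z); ((2)%N, Q4 (1)%Z (0)%Z (0)%Z (0)%Z)]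
  | TC => [:: ((0)%N, Q4 (1)%Z (0)%Z (-1)%Z (0)%Z); ((1)%N, Q4 (1)%Z (1)%Z (0)%Z (-1)%Z); ((2)%N, Q4 (0)%Z (1)%Z (0)%Z (0)%Z)]
  | TD0 => [:: ((0)%N, Q4 (1)%Z (0)%Z (0)%Z (1)%Z)]
  | TD1 => [:: ((2)%N, Q4 (0)%Z (0)%Z (0)%Z (1)%Z)]
  | TD2 => [:: ((4)%N, Q4 (0)%Z (0)%Z (0)%Z (1)%Z)]
  | TD n => [:: ((2 * n + 6)%N, Q4 (0)%Z (0)%Z (0)%Z (1)%Z)]
  | TE n => [:: ((2 * n + 2)%N, Q4 (0)%Z (0)%Z (1)%Z (0)%Z)]
  | TG0 => [:: ((3)%N, Q4 (1)%Z (0)%Z (-1)%Z (0)%Z); ((4)%N, Q4 (1)%Z (0)%Z (0)%Z (0)%Z)]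
  | TG n => [:: ((2 * n + 5)%N, Q4 (0)%Z (0)%Z (-1)%Z (0)%Z)]
  | TH1 => [:: ((2)%N, Q4 (0)%Z (0)%Z (-1)%Z (0)%Z); ((3)%N, Q4 (0)%Z (0)%Z (0)%Z (-1)%Z)]
  | TH n => [:: ((2 * n + 4)%N, Q4 (0)%Z (0)%Z (-1)%Z (0)%Z); ((2 * n + 5)%N, Q4 (0)%Z (0)%Z (0)%Z (-1)%Z)]
  | TI n => [:: ((2 * n + 3)%N, Q4 (0)%Z (-1)%Z (0)%Z (1)%Z)]
  | TJ n => [:: ((2 * n + 3)%N, Q4 (0)%Z (1)%Z (0)%Z (-1)%Z); ((2 * n + 4)%N, Q4 (0)%Z (1)%Z (0)%Z (0)%Z)]
  | TK n => [:: ((2 * n + 3)%N, Q4 (-1)%Z (0)%Z (1)%Z (0)%Z)]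
  | TL n => [:: ((2 * n + 5)%N, Q4 (1)%Z (0)%Z (-1)%Z (0)%Z); ((2 * n + 6)%N, Q4 (1)%Z (0)%Z (0)%Z (0)%Z)]
  end.

Definition phi (t : tag) : seq (nat * bool * bool * int) :=
  match t with
  | TA => [:: ((3)%N, false, false, (1)%Z); ((3)%N, true, false, (1)%Z)]
  | TB => [:: ((1)%N, true, false, (1)%Z)]
  | TC => [:: ((2)%N, false, true, (1)%Z)]
  | TD0 => [:: ((0)%N, true, true, (1)%Z)]
  | TD1 => [:: ((2)%N, true, true, (1)%Z)]
  | TD2 => [:: ((4)%N, true, true, (1)%Z); ((3)%N, false, false, (-1)%Z); ((3)%N, true, false, (-1)%Z)]
  | TD n => [:: ((2 * n + 6)%N, true, true, (1)%Z)]
  | TE n => [:: ((2 * n + 2)%N, true, false, (1)%Z); ((2 * n + 3)%N, true, true, (-1)%Z); ((2 * n + 3)%N, false, true, (-1)%Z)]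
  | TG0 => [:: ((4)%N, false, false, (1)%Z)]
  | TG n => [:: ((2 * n + 5)%N, true, false, (1)%Z); ((2 * n + 5)%N, false, false, (1)%Z)]
  | TH1 => [:: ((3)%N, false, true, (1)%Z); ((3)%N, true, true, (1)%Z); ((3)%N, false, false, (-1)%Z); ((3)%N, true, false, (-1)%Z)]
  | TH n => [:: ((2 * n + 5)%N, false, true, (1)%Z); ((2 * n + 5)%N, true, true, (1)%Z)]
  | TI n => [:: ((2 * n + 3)%N, false, true, (1)%Z); ((2 * n + 4)%N, false, true, (-1)%Z)]
  | TJ n => [:: ((2 * n + 4)%N, false, true, (1)%Z)]
  | TK n => [:: ((2 * n + 3)%N, false, false, (1)%Z); ((2 * n + 4)%N, false, false, (-1)%Z)]
  | TL n => [:: ((2 * n + 6)%N, false, false, (1)%Z)]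
  end.


Local Open Scope ring_scope.
Definition valI (ph : seq (nat * bool * bool * int)) (L : seq (nat * q4)) : int :=
  \sum_(y <- ph) y.2 * \sum_(x <- L) (if x.1 == y.1.1.1 then ent x.2 y.1.1.2 y.1.2 else 0).

Ltac splitall :=
  repeat (match goal with |- context[(?a == ?b)%N] => case: (@eqP nat a b) => ? end;
          try (exfalso; lia)).

Lemma val_ne0 t t' : valI (phi t) (terms t') != 0 -> t' = t.
Proof.
move: t t'; case=> [||||||n|n||n||n|n|n|n|n]; case=> [||||||m|m||m||m|m|m|m|m]; rewrite /valI /= !big_cons !big_nil /=; splitall;
  try done; try (move=> _; f_equal; lia).

Qed.

Lemma val_self t : valI (phi t) (terms t) != 0.
Proof.
case: t => [||||||n|n||n||n|n|n|n|n]; rewrite /valI /= !big_cons !big_nil /=; splitall; done.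
Qed.

Section Alg.
Variable R : realType.
Local Notation C := (R[i])%type.

Fact mon_key : unit. Proof. exact: tt. Qed.
Definition mon (M : 'M[C]_2) (k : nat) : {poly 'M[C]_2} := locked_with mon_key (M%:P * 'X^k).
Lemma monE M k : mon M k = M%:P * 'X^k.
Proof. by rewrite /mon unlock. Qed.

Lemma mon_mul A B a b : mon A a * mon B b = mon (A * B) (a + b).
Proof.
rewrite !monE mulrA -(mulrA A%:P) -(commr_polyXn B%:P a) mulrA -polyCM -mulrA -exprD.
by [].
Qed.

Lemma mon0 k : mon 0 k = 0.
Proof. by rewrite !monE mul0r. Qed.

Lemma mon_coef M k j : (mon M k)`_j = if j == k then M else 0.
Proof. by rewrite !monE coefCM coefXn; case: eqP => _; rewrite ?mulr1 ?mulr0. Qed.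

Lemma mx2_mul (a b c d a' b' c' d' : C) :
  mx2 a b c d * mx2 a' b' c' d' =
  mx2 (a * a' + b * c') (a * b' + b * d') (c * a' + d * c') (c * b' + d * d').
Proof.
apply/matrixP => i j; rewrite !mxE !big_ord_recl big_ord0 !mxE /=.
by case: (nat_of_ord i == 0%N); case: (nat_of_ord j == 0%N); rewrite addr0.
Qed.

Lemma mx2_add (a b c d a' b' c' d' : C) :
  mx2 a b c d + mx2 a' b' c' d' = mx2 (a + a') (b + b') (c + c') (d + d').
Proof.
apply/matrixP => i j; rewrite !mxE.
by case: (nat_of_ord i == 0%N); case: (nat_of_ord j == 0%N).
Qed.

Lemma mx2_scale (x a b c d : C) :
  x *: mx2 a b c d = mx2 (x * a) (x * b) (x * c) (x * d).
Proof.
apply/matrixP => i j; rewrite !mxE.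
by case: (nat_of_ord i == 0%N); case: (nat_of_ord j == 0%N).
Qed.

Lemma mx2_0 : mx2 0 0 0 0 = 0 :> 'M[C]_2.
Proof.
apply/matrixP => i j; rewrite !mxE.
by case: (nat_of_ord i == 0%N); case: (nat_of_ord j == 0%N).
Qed.

Lemma mx2_1 : mx2 1 0 0 1 = 1 :> 'M[C]_2.
Proof.
apply/matrixP => -[[|[|i]] Hi] [[|[|j]] Hj]; rewrite !mxE //=.
Qed.

Lemma half2 : Defs.half C + Defs.half C = 1.
Proof. rewrite /Defs.half; field; done. Qed.


Lemma mon_add A B k : mon A k + mon B k = mon (A + B) k.
Proof. by rewrite !monE -mulrDl -polyCD. Qed.

Lemma mon_eq A B a b : A = B -> a = b -> mon A a = mon B b.
Proof. by move=> -> ->. Qed.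

Lemma monC M : M%:P = mon M 0.
Proof. by rewrite !monE expr0 mulr1. Qed.
Lemma monX1 M : M%:P * 'X = mon M 1.
Proof. by rewrite !monE expr1. Qed.
Lemma monX2 M : M%:P * 'X^2 = mon M 2.
Proof. by rewrite monE. Qed.

Lemma mon_opp M k : - mon M k = mon (- M) k.
Proof. by rewrite !monE polyCN mulNr. Qed.

Lemma mx2_opp (a b c d : C) : - mx2 a b c d = mx2 (- a) (- b) (- c) (- d).
Proof.
apply/matrixP => i j; rewrite !mxE.
by case: (nat_of_ord i == 0%N); case: (nat_of_ord j == 0%N).
Qed.

Lemma beta1E : beta1 C = mon (mx2 1 0 (-1) 0) 0 + mon (mx2 1 1 0 (-1)) 1 + mon (mx2 0 1 0 0) 2.
Proof.
rewrite /beta1 /alpha1 /alpha3 !monX2 !monX1 !monC.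
rewrite -!addrA; congr (_ + _).
rewrite (addrCA (mon _ 2)) (addrA (mon (mx2 0 0 1 0) 1)) !mon_add.
congr (_ + _); congr mon; rewrite ?mx2_scale !mx2_add; congr mx2; rewrite /Defs.half; field; done.
Qed.

Lemma beta3E : beta3 C = mon (mx2 1 0 (-1) 0) 0 + mon (mx2 (-1) (-1) 2 1) 1 + mon (mx2 1 0 0 0) 2.
Proof.
rewrite /beta3 /alpha1 /alpha3 !monX2 !monX1 !monC opprD !mon_opp.
rewrite -!addrA; congr (_ + _).
rewrite (addrCA (mon _ 2)) (addrA (mon (mx2 0 0 1 0) 1)) !mon_add.
congr (_ + _); congr mon; rewrite ?mx2_scale ?mx2_opp ?mx2_scale !mx2_add; congr mx2; rewrite /Defs.half; field; done.
Qed.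

Lemma beta4E : beta4 C = mon (mx2 0 0 1 0) 2.
Proof.
rewrite /beta4 /alpha4 !monX2 mulr2n mon_add mx2_scale mx2_add.
congr mon; congr mx2; rewrite /Defs.half; field; done.
Qed.

Lemma beta5E : beta5 C = mon (mx2 0 0 0 1) 2.
Proof.
rewrite /beta5 /alpha5 !monX2 mulr2n mon_add mx2_scale mx2_add.
congr mon; congr mx2; rewrite /Defs.half; field; done.
Qed.

Ltac simpm := rewrite ?mx2_mul ?mx2_add;
  rewrite ?(mul0r, mulr0, mul1r, mulr1, add0r, addr0, mulN1r, mulrN1, opprK, oppr0);
  rewrite ?mx2_0 ?mon0 ?addr0 ?add0r.

Lemma beta5P m : beta5 C ^+ m.+1 = mon (mx2 0 0 0 1) (2 * m + 2).
Proof.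
elim: m => [|m IH]; first by rewrite expr1 beta5E.
rewrite exprS IH beta5E mon_mul; simpm.
by apply: mon_eq => //; lia.
Qed.


Definition qm (q : q4) : 'M[C]_2 :=
  let: Q4 a b c d := q in mx2 a%:~R b%:~R c%:~R d%:~R.
Definition pof (L : seq (nat * q4)) : {poly 'M[C]_2} := \sum_(x <- L) mon (qm x.2) x.1.

Ltac unpof := rewrite /pof !big_cons big_nil /= ?addr0.

Ltac fin := rewrite ?addrA; (repeat congr (_ + _)); apply: mon_eq => //; try congr mx2; try lia.

Lemma famA : beta4 C * beta1 C = pof (terms TA).
Proof. rewrite beta4E beta1E !mulrDr !mon_mul; simpm; unpof; fin. Qed.

Lemma famB : beta3 C = pof (terms TB).
Proof. rewrite beta3E; unpof; fin. Qed.

Lemma famC : beta1 C = pof (terms TC).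
Proof. rewrite beta1E; unpof; fin. Qed.

Lemma famD0 : beta5 C ^+ 0 = pof (terms TD0).
Proof. unpof; rewrite expr0 monE expr0 mulr1 -polyC1 -mx2_1. done. Qed.

Lemma famD1 : beta5 C ^+ 1 = pof (terms TD1).
Proof. rewrite (beta5P 0); unpof; fin. Qed.

Lemma famD2 : beta5 C ^+ 2 = pof (terms TD2).
Proof. rewrite (beta5P 1); unpof; fin. Qed.

Lemma famD m : beta5 C ^+ m.+3 = pof (terms (TD m)).
Proof. rewrite (beta5P m.+2); unpof; fin. Qed.

Lemma famE n : beta5 C ^+ n * beta4 C = pof (terms (TE n)).
Proof.
case: n => [|m]; first by rewrite expr0 mul1r beta4E; unpof; fin.
rewrite beta5P beta4E !mon_mul; simpm; unpof; fin.
Qed.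

Lemma famG0 : beta5 C ^+ 0 * beta1 C * beta4 C = pof (terms TG0).
Proof. rewrite expr0 mul1r beta1E beta4E !mulrDl !mon_mul; simpm; unpof; fin. Qed.

Lemma famG m : beta5 C ^+ m.+1 * beta1 C * beta4 C = pof (terms (TG m)).
Proof. rewrite beta5P beta1E beta4E !mulrDr !mulrDl !mon_mul; simpm; unpof; fin. Qed.

Lemma famH1 : beta5 C ^+ 1 * beta1 C = pof (terms TH1).
Proof. rewrite (beta5P 0) beta1E !mulrDr !mon_mul; simpm; unpof; fin. Qed.

Lemma famH m : beta5 C ^+ m.+2 * beta1 C = pof (terms (TH m)).
Proof. rewrite (beta5P m.+1) beta1E !mulrDr !mon_mul; simpm; unpof; fin. Qed.

Lemma famI m : beta3 C * beta5 C ^+ m.+1 = pof (terms (TI m)).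
Proof. rewrite beta5P beta3E !mulrDl !mon_mul; simpm; unpof; fin. Qed.

Lemma famJ m : beta1 C * beta5 C ^+ m.+1 = pof (terms (TJ m)).
Proof. rewrite beta5P beta1E !mulrDl !mon_mul; simpm; unpof; fin. Qed.

Lemma famK n : beta3 C * beta5 C ^+ n * beta4 C = pof (terms (TK n)).
Proof.
case: n => [|m].
  by rewrite expr0 mulr1 beta3E beta4E !mulrDl !mon_mul; simpm; unpof; fin.
rewrite beta5P beta3E beta4E !mulrDl !mon_mul; simpm; unpof; fin.
Qed.

Lemma famL m : beta1 C * beta5 C ^+ m.+1 * beta4 C = pof (terms (TL m)).
Proof. rewrite beta5P beta1E beta4E !mulrDl !mon_mul; simpm; unpof; fin. Qed.

Definition oob (b : bool) : 'I_2 := if b then ord_max else ord0.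

Definition Phi (ph : seq (nat * bool * bool * int)) (p : {poly 'M[C]_2}) : C :=
  \sum_(y <- ph) (y.2)%:~R * (p`_(y.1.1.1)) (oob y.1.1.2) (oob y.1.2).

Lemma Phi_pof ph L : Phi ph (pof L) = (valI ph L)%:~R.
Proof.
rewrite /Phi /valI rmorph_sum; apply: eq_bigr => y _; rewrite rmorphM; congr (_ * _).
rewrite /pof coef_sum summxE rmorph_sum; apply: eq_bigr => x _; rewrite mon_coef eq_sym.
case: eqP => _; last by rewrite mxE.
case: x => k [a b c d] /=; case: y => [[[k' i] j] w] /=.
by case: i; case: j; rewrite /oob !mxE.
Qed.

Lemma Phi_sum ph (s : seq {poly 'M[C]_2}) (c : {poly 'M[C]_2} -> C) :
  Phi ph (\sum_(p <- s) cscale (c p) p) = \sum_(p <- s) c p * Phi ph p.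
Proof.
rewrite /Phi.
under eq_bigr do rewrite coef_sum summxE mulr_sumr.
rewrite exchange_big /=; apply: eq_bigr => p _.
rewrite mulr_sumr; apply: eq_bigr => y _.
by rewrite /cscale coefCM -mulmxE mul_scalar_mx mxE mulrCA.
Qed.

Lemma Phi0 ph : Phi ph 0 = 0.
Proof. by rewrite /Phi big1 // => y _; rewrite coef0 mxE mulr0. Qed.

Lemma Bset_tag p : Bset p -> exists t, p = pof (terms t).
Proof.
rewrite /Bset.
case=> [->|[->|[->|[[n ->]|[[n ->]|[[n ->]|[[n n1 ->]|[[n n1 ->]|[[n n1 ->]|[[n ->]|[n n1 ->]]]]]]]]]]].
- by exists TA; exact: famA.
- by exists TB; exact: famB.
- by exists TC; exact: famC.
- case: n => [|[|[|m]]].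
  + by exists TD0; exact: famD0.
  + by exists TD1; exact: famD1.
  + by exists TD2; exact: famD2.
  + by exists (TD m); exact: famD.
- by exists (TE n); exact: famE.
- case: n => [|m].
  + by exists TG0; exact: famG0.
  + by exists (TG m); exact: famG.
- case: n n1 => [|[|m]] n1; first by [].
  + by exists TH1; exact: famH1.
  + by exists (TH m); exact: famH.
- case: n n1 => [|m] n1; first by [].
  by exists (TI m); exact: famI.
- case: n n1 => [|m] n1; first by [].
  by exists (TJ m); exact: famJ.
- by exists (TK n); exact: famK.
- case: n n1 => [|m] n1; first by [].
  by exists (TL m); exact: famL.
Qed.

End Alg.

Theorem proposition4 (R : realType) : lin_indep (@Bset (R[i])%type).
Proof.
move=> s c Us Ss Hs q qs.
have [t Eq] := Bset_tag (Ss q qs).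
have := congr1 (Phi (phi t)) Hs.
rewrite Phi_sum Phi0 (bigD1_seq q) //=.
rewrite big1_seq ?addr0.
  rewrite Eq Phi_pof -Eq => /eqP.
  by rewrite mulf_eq0 intr_eq0 (negbTE (val_self t)) orbF => /eqP.
move=> p /andP [pq ps]; have [t' Ep] := Bset_tag (Ss p ps).
rewrite Ep Phi_pof.
case: (eqVneq (valI (phi t) (terms t')) 0) => [-> | H]; first by rewrite mulr0.
have Ett := val_ne0 H.
by move: pq; rewrite Ep Ett -Eq eqxx.
Qed.
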